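(* Let $S$ be a compact Hausdorff topological Clifford semigroup satisfying: (B1) $E(S)$, with the subspace topology, is a metrizable perfect semilattice; (B2) each maximal subgroup $G_e$ is compact metrizable; (B3) the functor $e\mapsto G_e$ is inverse-limit preserving. Let $d$ be the function on $S\times S$ constructed below. Then $d$ is a metric on $S$ inducing the topology of $S$ (which coincides with the Bowman topology). In particular $S$ is metrizable.
   Context: A Clifford semigroup is an inverse semigroup (each $x$ has a unique $x^{-1}$ with $xx^{-1}x=x$, $x^{-1}xx^{-1}=x^{-1}$) with $xx^{-1}=x^{-1}x$ for all $x$; a topological Clifford semigroup has continuous multiplication and inversion. $E(S)$ is the set of idempotents, a semilattice ordered by $e\le f\iff ef=e$ (so $ef=\inf\{e,f\}$). $G_e:=\{x: xx^{-1}=e\}$ (subspace topology), $S=\bigsqcup_e G_e$, and we write elements of $S$ as pairs $(e,g)$ with $g\in G_e$. For $e\le f$, $\varphi_{f,e}\colon G_f\to G_e$, $x\mapsto ex$. Way-below: in a poset, $x\ll y$ if for every nonempty up-directed $D$ whose supremum exists with $y\le\sup D$, there is $d\in D$ with $x\le d$; $x\ll y$ implies $x\le y$. A perfect semilattice is a compact Hausdorff topological semilattice in which every point has a neighbourhood basis of open subsemilattices. It is known that a perfect semilattice is a complete continuous semilattice (every $x$ is the supremum of $\{y: y\ll x\}$, which is directed) whose topology is its Lawson topology; in particular each set $\twoheaduparrow b:=\{e: b\ll e\}$ is open, and $E(S)$ has a minimum $0$. A (domain) basis of $E(S)$ is a subset $\mathcal B$ such that for every $x$, $\{b\in\mathcal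 B: b\ll x\}$ is up-directed with supremum $x$; under (B1) $E(S)$ admits a countable basis. The functor $e\mapsto G_e$ is inverse-limit preserving if for every nonempty up-directed $D\subseteq E(S)$ with $e=\sup D$, the map $G_e\to\varprojlim_{b\in D}G_b$, $g\mapsto(\varphi_{e,b}(g))_{b\in D}$, is an isomorphism of topological groups. Construction of $d$: fix a compatible metric $\rho\le 1$ on $E(S)$ and a countable basis $\mathcal B=\{b_j\}_{j\ge1}$ of $E(S)$. For each $b\in\mathcal B$ choose a compatible metric $d_b\le1$ on $G_b$, a point $c_b\in G_b$, and a dense sequence $\{t_{b,k}\}_{k\ge1}$ in $G_b$. For $b\ne 0$ let $a_b(e):=\rho(e,E(S)\setminus\twoheaduparrow b)$ (distance to a set), and let $a_0\equiv1$. Let $\widehat\varphi_{e,b}\colon G_e\to G_b$ be $\varphi_{e,b}$ if $b\le e$ and the constant map with value $c_b$ otherwise. Put $P_b((e,g),(f,h)) := |a_b(e)-a_b(f)| + \sum_{k\ge1}2^{-k}\bigl|a_b(e)\,d_b(\widehat\varphi_{e,b}(g),t_{b,k}) - a_b(f)\,d_b(\widehat\varphi_{f,b}(h),t_{b,k})\bigr|$ and $d((e,g),(f,h)) := \rho(e,f)+\sum_{j\ge1}2^{-j}P_{b_j}((e,g),(f,h))$. *)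

(* Defs.v *)
From HB Require Import structures.
From mathcomp Require Import all_boot all_order all_algebra.
From mathcomp Require Import all_classical all_reals all_analysis.
Set Implicit Arguments. Unset Strict Implicit. Unset Printing Implicit Defensive.
Import Order.TTheory GRing.Theory Num.Theory.
Local Open Scope classical_set_scope.
Local Open Scope ring_scope.

Section Clifford.
Context {R : realType} {S : topologicalType}.

Definition is_metric_on (A : set S) (m : S -> S -> R) : Prop :=
  forall x y z, A x -> A y -> A z ->
    [/\ 0 <= m x y, (m x y = 0 <-> x = y), m x y = m y x
      & m x z <= m x y + m y z].

Definition compatible_metric (A : set S) (m : S -> S -> R) : Prop :=
  is_metric_on A m /\
  forall x, A x -> forall U : set S,
    (exists W : set S, [/\ open W, W x & W `&` A `<=` U]) <->
    (exists eps : R, 0 < eps /\ [set y | A y /\ m x y < eps] `<=` U).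

Definition metrizable (A : set S) : Prop := exists m, compatible_metric A m.

Definition dense_seq (A : set S) (t : nat -> S) : Prop :=
  (forall k, A (t k)) /\
  forall x, A x -> forall W : set S, open W -> W x -> exists k, W (t k).

Definition rsum (u : nat -> R) : R := limn (fun n => \sum_(k < n) u k).

Variables (mul : S -> S -> S) (inv : S -> S).

Definition topological_clifford : Prop :=
  [/\ (forall x y z, mul x (mul y z) = mul (mul x y) z),
      (forall x, mul (mul x (inv x)) x = x /\ mul (mul (inv x) x) (inv x) = inv x),
      (forall x y, mul (mul x y) x = x -> mul (mul y x) y = y -> y = inv x),
      (forall x, mul x (inv x) = mul (inv x) x)
    & continuous (fun p : S * S => mul p.1 p.2) /\ continuous inv].

Definition E : set S := [set e | mul e e = e].
Definition sle (e f : S) : Prop := mul e f = e.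

Definition G (e : S) : set S := [set x | mul x (inv x) = e].

Definition updirected (D : set S) : Prop :=
  (exists d, D d) /\
  forall a b, D a -> D b -> exists c, [/\ D c, sle a c & sle b c].

Definition is_sup (D : set S) (s : S) : Prop :=
  [/\ E s, (forall d, D d -> sle d s)
    & (forall u, E u -> (forall d, D d -> sle d u) -> sle s u)].

Definition waybelow (x y : S) : Prop :=
  forall D : set S, D `<=` E -> updirected D ->
  forall s, is_sup D s -> sle y s -> exists2 d, D d & sle x d.

Definition is_bottom (z : S) : Prop := E z /\ forall e, E e -> sle z e.

Definition domain_basis (B : set S) : Prop :=
  B `<=` E /\
  forall x, E x ->
    updirected [set b | B b /\ waybelow b x] /\
    is_sup [set b | B b /\ waybelow b x] x.

Definition rel_open (A V : set S) : Prop := exists W, open W /\ V = W `&` A.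

Definition perfect_semilattice : Prop :=
  [/\ compact E,
      {in E &, forall e f, E (mul e f)},
      (forall x : S * S, E x.1 -> E x.2 ->
         {for x, continuous (fun p : S * S => mul p.1 p.2)}) &
      (forall x, E x -> forall U : set S,
        (exists W : set S, [/\ open W, W x & W `&` E `<=` U]) ->
        exists V : set S, [/\ rel_open E V, V x, V `<=` U &
                              forall a b, V a -> V b -> V (mul a b)])].

(* phi_{f,e} : G_f -> G_e, x |-> e x *)
Definition phi (e : S) (x : S) : S := mul e x.

(* (B3): for every nonempty up-directed D in E(S) with supremum e, the map
   G_e -> lim_{b in D} G_b, g |-> (b g)_{b in D}, is an isomorphism of
   topological groups.  The inverse limit is the set of families
   (h_b)_{b in D} (represented by functions S -> S whose values off D are
   ignored) with h_b in G_b and phi_{b',b}(h_b') = h_b for b <= b' in D,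
   carrying the subspace topology of the product topology. *)
Definition in_invlim (D : set S) (h : S -> S) : Prop :=
  (forall b, D b -> G b (h b)) /\
  (forall b b', D b -> D b' -> sle b b' -> phi b (h b') = h b).

Definition inverse_limit_preserving : Prop :=
  forall D : set S, D `<=` E -> updirected D -> forall e, is_sup D e ->
  [/\
      (forall g g', G e g -> G e g' -> forall b, D b ->
          phi b (mul g g') = mul (phi b g) (phi b g')),
      (forall g g', G e g -> G e g' ->
          (forall b, D b -> phi b g = phi b g') -> g = g') /\
      (forall g, G e g -> in_invlim D (fun b => phi b g)),
      (forall h, in_invlim D h -> exists2 g, G e g & forall b, D b -> phi b g = h b),
      (* continuous (into the product topology) *)
      (forall g, G e g -> forall b, D b -> forall W : set S, open W -> W (phi b g) ->
          exists V : set S, [/\ open V, V g &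
             forall g', G e g' -> V g' -> W (phi b g')]) &
      (* open onto its image (so the inverse is continuous) *)
      (forall g, G e g -> forall V : set S, open V -> V g ->
          exists (F : seq S) (W : S -> set S),
            [/\ {in F, forall b, D b}, {in F, forall b, open (W b) /\ W b (phi b g)} &
                forall g', G e g' -> {in F, forall b, W b (phi b g')} -> V g'])].

Variables (rho : S -> S -> R) (bs : nat -> S) (db : S -> S -> S -> R)
          (c : S -> S) (t : S -> nat -> S).

(* the idempotent component e = x x^{-1} of x = (e, g) *)
Definition idc (x : S) : S := mul x (inv x).

Definition a_ (b e : S) : R :=
  if `[< is_bottom b >] then 1
  else inf [set rho e y | y in [set y | E y /\ ~ waybelow b y]].

Definition phihat (b x : S) : S :=
  if `[< sle b (idc x) >] then mul b x else c b.

Definition P_ (b x y : S) : R :=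
  `|a_ b (idc x) - a_ b (idc y)| +
  rsum (fun k => (2%:R ^+ k.+1)^-1 *
     `|a_ b (idc x) * db b (phihat b x) (t b k.+1)
       - a_ b (idc y) * db b (phihat b y) (t b k.+1)|).

Definition dmetric (x y : S) : R :=
  rho (idc x) (idc y) + rsum (fun j => (2%:R ^+ j.+1)^-1 * P_ (bs j.+1) x y).

End Clifford.

(* Main.v *)
Require Import Defs.
From HB Require Import structures.
From mathcomp Require Import all_boot all_order all_algebra.
From mathcomp Require Import all_classical all_reals all_analysis.
Import Order.TTheory GRing.Theory Num.Theory.
Local Open Scope classical_set_scope.
Local Open Scope ring_scope.
From mathcomp Require Import ring lra.
Set Implicit Arguments. Unset Strict Implicit.




Section Alg.
Context {S : topologicalType} (mul : S -> S -> S) (inv : S -> S)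
  (hS : topological_clifford mul inv).

Let hA : forall x y z, mul x (mul y z) = mul (mul x y) z.
Proof. by case: hS. Qed.
Let hI : forall x, mul (mul x (inv x)) x = x /\ mul (mul (inv x) x) (inv x) = inv x.
Proof. by case: hS. Qed.
Let hU : forall x y, mul (mul x y) x = x -> mul (mul y x) y = y -> y = inv x.
Proof. by case: hS. Qed.
Let hC : forall x, mul x (inv x) = mul (inv x) x.
Proof. by case: hS. Qed.

Lemma cl_idr e u : E mul e -> mul (mul u e) e = mul u e.
Proof. by move=> He; rewrite -hA He. Qed.

Lemma cl_Einv e : E mul e -> inv e = e.
Proof. by move=> He; symmetry; apply: hU; rewrite He He. Qed.

Lemma cl_invinv x : inv (inv x) = x.
Proof. by symmetry; apply: hU; [case: (hI x)|case: (hI x)]. Qed.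

Lemma cl_EM e f : E mul e -> E mul f -> E mul (mul e f).
Proof.
move=> He Hf.
set x := mul e f; set x' := inv x.
have [h1 h2] := hI x; rewrite -/x' in h1 h2.
have Hy : mul (mul f x') e = x'.
  apply: hU.
  - transitivity (mul (mul x x') x); last exact: h1.
    by rewrite /x !hA ?cl_idr.
  - transitivity (mul (mul f (mul (mul x' x) x')) e); last by rewrite h2.
    by rewrite /x !hA ?cl_idr.
have Hid : E mul x'.
  rewrite /E /= -[in LHS]Hy.
  transitivity (mul (mul f (mul (mul x' x) x')) e); last by rewrite h2 Hy.
  by rewrite /x !hA ?cl_idr.
have -> : x = x' by rewrite -[x]cl_invinv (cl_Einv Hid).
exact: Hid.
Qed.

Lemma cl_Ecomm e f : E mul e -> E mul f -> mul e f = mul f e.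
Proof.
move=> He Hf.
have Hef := cl_EM He Hf; have Hfe := cl_EM Hf He.
rewrite -(cl_Einv Hef); symmetry; apply: hU.
- transitivity (mul (mul e f) (mul e f)); last exact: Hef.
  by rewrite !hA ?cl_idr.
- transitivity (mul (mul f e) (mul f e)); last exact: Hfe.
  by rewrite !hA ?cl_idr.
Qed.

Lemma cl_Ef x : E mul (mul x (inv x)).
Proof. by rewrite /E /= hA (hI x).1. Qed.
Lemma cl_Ef' x : E mul (mul (inv x) x).
Proof. by rewrite /E /= hA (hI x).2. Qed.

Lemma cl_invM e x : E mul e -> inv (mul x e) = mul e (inv x).
Proof.
move=> He; have [h1 h2] := hI x; have Hf' := cl_Ef' x.
symmetry; apply: hU.
- transitivity (mul x (mul (mul e (mul (inv x) x)) e)); first by rewrite !hA ?cl_idr.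
  rewrite (cl_Ecomm He Hf').
  transitivity (mul (mul (mul x (inv x)) x) e); first by rewrite !hA ?cl_idr.
  by rewrite h1.
- transitivity (mul (mul e (mul (mul (inv x) x) e)) (inv x)); first by rewrite !hA ?cl_idr.
  rewrite -(cl_Ecomm He Hf').
  have He' : mul e e = e := He.
  transitivity (mul e (mul (mul (inv x) x) (inv x))); first by rewrite !hA He'.
  by rewrite h2.
Qed.

Lemma cl_central e x : E mul e -> mul e x = mul x e.
Proof.
move=> He; have [h1 h2] := hI x; have Hf' := cl_Ef' x.
have k := hC (mul x e); rewrite cl_invM // in k.
have c1 := cl_Ecomm He Hf'.
have s1 : mul e x = mul (mul (mul e (inv x)) (mul x e)) x.
  transitivity (mul (mul (mul (mul (inv x) x) e) e) x); last first.
    by rewrite -c1 !hA.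
  rewrite cl_idr // -c1 -hA -hC h1 //.
rewrite s1 -k.
transitivity (mul x (mul e (mul (inv x) x))); first by rewrite !hA ?cl_idr.
by rewrite c1 hA [mul x (mul _ _)]hA h1.
Qed.

Lemma cl_GM b x : E mul b -> sle mul b (idc mul inv x) -> G mul inv b (mul b x).
Proof.
move=> Hb; rewrite /sle /idc /G /= => hb.
rewrite (cl_central x Hb) cl_invM // !hA cl_idr // -hA.
by rewrite (cl_central (inv x) Hb) hA -(cl_central (mul x (inv x)) Hb).
Qed.

Lemma cl_idcE x : E mul (idc mul inv x).
Proof. exact: cl_Ef. Qed.

End Alg.



Section Topo.
Context {S : topologicalType}.

Definition pc (f : S -> S) := forall w W, open W -> W (f w) ->
  exists Q0, [/\ open Q0, Q0 w & forall y, Q0 y -> W (f y)].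

Lemma open_local (X : set S) :
  (forall x, X x -> exists Q0, [/\ open Q0, Q0 x & Q0 `<=` X]) -> open X.
Proof.
move=> h; rewrite openE; move=> x /h [Q0 [oO Ox sOX]].
rewrite /interior nbhsE /=; by exists Q0.
Qed.

Lemma open_ex (x : S) A : nbhs x A -> exists Q0, [/\ open Q0, Q0 x & Q0 `<=` A].
Proof. by rewrite nbhsE => -[Q0 [oO Ox] sOA]; exists Q0. Qed.

Lemma pc_id : pc id.
Proof. by move=> w W oW Ww; exists W. Qed.

Lemma pc_cst a : pc (fun _ => a).
Proof. by move=> w W oW Ww; exists setT; split => //; exact: openT. Qed.

Lemma pc_mul (mul : S -> S -> S) : continuous (fun p : S * S => mul p.1 p.2) ->
  forall f g, pc f -> pc g -> pc (fun w => mul (f w) (g w)).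
Proof.
move=> hm f g hf hg w W oW Ww.
have := hm (f w, g w) W (open_nbhs_nbhs (conj oW Ww)).
case=> [[Q R] /= [nQ nR] sQR].
have [A [oA Afw sAQ]] := open_ex nQ; have [B [oB Bgw sBR]] := open_ex nR.
have [Q1 [oO1 O1w h1]] := hf w A oA Afw; have [Q2 [oO2 O2w h2]] := hg w B oB Bgw.
exists (Q1 `&` Q2); split; [exact: openI|by split|].
move=> y [/h1 Ay /h2 By]; apply: (sQR (f y, g y)); split; [exact: sAQ|exact: sBR].
Qed.

Lemma pc_inv (inv : S -> S) : continuous inv -> forall f, pc f -> pc (fun w => inv (f w)).
Proof.
move=> hi f hf w W oW Ww.
have := hi (f w) W (open_nbhs_nbhs (conj oW Ww)) => /open_ex [A [oA Afw sA]].
have [Q0 [oO Ow h]] := hf w A oA Afw.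
by exists Q0; split => // y /h /sA.
Qed.

Lemma closed_eqfun f g : hausdorff_space S -> pc f -> pc g -> closed [set w | f w = g w].
Proof.
move=> hT2 hf hg; rewrite -openC; apply: open_local => x /= nfx.
have ne : f x != g x by apply/eqP.
move: hT2; rewrite open_hausdorff => /(_ (f x) (g x) ne) [[A B] /= [fA gB]].
move=> [oA oB /eqP AB0].
have [Q1 [oO1 O1x h1]] := hf x A oA (set_mem fA).
have [Q2 [oO2 O2x h2]] := hg x B oB (set_mem gB).
exists (Q1 `&` Q2); split; [exact: openI|by split|].
move=> y [/h1 Ay /h2 By] efg.
have : (A `&` B) (f y) by split => //; rewrite efg.
by rewrite AB0.
Qed.

Lemma dir_fip (I : Type) (D : set I) (f : I -> set S) : compact [set: S] ->
  (exists i, D i) ->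
  (forall i j, D i -> D j -> exists2 k, D k & f k `<=` f i `&` f j) ->
  (forall i, D i -> closed (f i)) -> (forall i, D i -> f i !=set0) ->
  exists p, forall i, D i -> f i p.
Proof.
move=> hcpt hD hdir hcl hne.
have FF := filter_from_filter hD hdir.
have PF := filter_from_proper FF hne.
have [p [_ cp]] := hcpt _ PF (@filterT _ _ FF).
exists p => i Di; rewrite clusterE in cp.
have := cp (f i); rewrite -(closure_id (f i)).1; last exact: hcl.
by apply; exists i.
Qed.

End Topo.



Section Semi.
Context {R : realType} {S : topologicalType} (mul : S -> S -> S) (inv : S -> S)
  (hS : topological_clifford mul inv) (hcpt : compact [set: S])
  (hT2 : hausdorff_space S) (hP : perfect_semilattice mul)
  (rho : S -> S -> R) (hrho : compatible_metric (E mul) rho).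

Let hA : forall x y z, mul x (mul y z) = mul (mul x y) z.
Proof. by case: hS. Qed.
Let hm : continuous (fun p : S * S => mul p.1 p.2).
Proof. by case: hS => _ _ _ _ []. Qed.
Let hinv : continuous inv.
Proof. by case: hS => _ _ _ _ []. Qed.

Lemma pcL a : pc (fun w => mul a w).
Proof. exact (pc_mul hm (pc_cst (a:=a)) pc_id). Qed.
Lemma pcR a : pc (fun w => mul w a).
Proof. exact (pc_mul hm pc_id (pc_cst (a:=a))). Qed.
Lemma pc_idc : pc (idc mul inv).
Proof. exact (pc_mul hm pc_id (pc_inv hinv pc_id)). Qed.

Lemma E_closed : closed (E mul).
Proof. exact (closed_eqfun hT2 (pc_mul hm pc_id pc_id) pc_id). Qed.
Lemma up_closed z : closed [set w | mul z w = z].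
Proof. exact (closed_eqfun hT2 (pcL (a:=z)) (pc_cst (a:=z))). Qed.
Lemma down_closed v : closed [set w | mul w v = w].
Proof. exact (closed_eqfun hT2 (pcR (a:=v)) pc_id). Qed.

Lemma sle_trans a b c : sle mul a b -> sle mul b c -> sle mul a c.
Proof. by rewrite /sle => hab hbc; rewrite -hab -hA hbc. Qed.
Lemma sle_refl a : E mul a -> sle mul a a.
Proof. by []. Qed.
Lemma sle_antisym a b : E mul a -> E mul b -> sle mul a b -> sle mul b a -> a = b.
Proof. by rewrite /sle => Ea Eb hab hba; rewrite -hab (cl_Ecomm hS Ea Eb). Qed.

Lemma wb_le b y : E mul y -> waybelow mul b y -> sle mul b y.
Proof.
move=> Ey hw.
have h1 : [set y] `<=` E mul by move=> z ->.
have h2 : updirected mul [set y].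
  by split; [exists y|move=> a a' -> ->; exists y].
have h3 : is_sup mul [set y] y.
  by split => // [d -> //|u _ /(_ y erefl)].
by have [d -> //] := hw [set y] h1 h2 y h3 (sle_refl Ey).
Qed.

Lemma wb_le_trans a b c : sle mul a b -> waybelow mul b c -> waybelow mul a c.
Proof.
move=> hab hw D DE dD s sD hcs.
have [d Dd hbd] := hw D DE dD s sD hcs.
by exists d => //; exact: sle_trans hab hbd.
Qed.

Lemma rho_ge0 x y : E mul x -> E mul y -> 0 <= rho x y.
Proof. by move=> Ex Ey; case: (hrho.1 x y x Ex Ey Ex). Qed.
Lemma rho_sym x y : E mul x -> E mul y -> rho x y = rho y x.
Proof. by move=> Ex Ey; case: (hrho.1 x y x Ex Ey Ex). Qed.
Lemma rho_tri x y z : E mul x -> E mul y -> E mul z -> rho x z <= rho x y + rho y z.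
Proof. by move=> Ex Ey Ez; case: (hrho.1 x y z Ex Ey Ez). Qed.
Lemma rho0 x y : E mul x -> E mul y -> rho x y = 0 <-> x = y.
Proof. by move=> Ex Ey; case: (hrho.1 x y x Ex Ey Ex). Qed.

Lemma cm_ball x eps : E mul x -> 0 < eps ->
  exists W, [/\ open W, W x & forall y, W y -> E mul y -> rho x y < eps].
Proof.
move=> Ex e0.
have [_ h] := hrho.2 x Ex [set y | E mul y /\ rho x y < eps].
have [|W [oW Wx sW]] := h; first by exists eps; split.
by exists W; split => // y Wy Ey; case: (sW y (conj Wy Ey)).
Qed.

Lemma cm_open x W : E mul x -> open W -> W x ->
  exists eps, 0 < eps /\ forall y, E mul y -> rho x y < eps -> W y.
Proof.
move=> Ex oW Wx.
have [h _] := hrho.2 x Ex W.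
have [|eps [e0 h']] := h; first by exists W; split => // y [].
by exists eps; split => // y Ey hy; apply: h'.
Qed.

Lemma cball_closed e r : E mul e -> closed [set y | E mul y /\ rho e y <= r].
Proof.
move=> Ee; rewrite -openC; apply: open_local => x /= nx.
have [Ex|nEx] := pselect (E mul x); last first.
  exists (~` E mul); split => //; first by rewrite openC; exact: E_closed.
  by move=> y /= nEy [].
have lt : r < rho e x by rewrite ltNge; apply/negP => h; apply: nx.
have gt : 0 < rho e x - r by rewrite subr_gt0.
have [W [oW Wx hW]] := cm_ball Ex gt.
exists W; split => // y Wy [Ey hy].
have := hW y Wy Ey; have := rho_tri Ee Ey Ex; rewrite (rho_sym Ey Ex).
move=> h1 h2; lra.
Qed.


Lemma dir_conv D s Q : D `<=` E mul -> updirected mul D -> is_sup mul D s ->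
  open Q -> Q s -> exists2 d0, D d0 & forall d, D d -> sle mul d0 d -> Q d.
Proof.
move=> DE [[d1 Dd1] dD] [Es ubs lubs] oQ Qs.
have [//|hn] := pselect (exists2 d0, D d0 & forall d, D d -> sle mul d0 d -> Q d).
exfalso.
have hne : forall d0, D d0 -> exists d, [/\ D d, sle mul d0 d & ~ Q d].
  move=> d0 Dd0; apply: contrapT => hx; apply: hn; exists d0 => // d Dd hd.
  by apply: contrapT => nQ; apply: hx; exists d.
pose f d0 := [set w | mul d0 w = d0] `&` ~` Q `&` E mul `&` [set w | mul w s = w].
have [p hp] : exists p, forall i, D i -> f i p.
  apply: (dir_fip hcpt (ex_intro _ d1 Dd1)).
- move=> i j Di Dj; have [k [Dk hik hjk]] := dD i j Di Dj.
  exists k => // w [[[hkw nQw] Ew] hws]; split.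
  + split; [split; [split|]|] => //.
    by rewrite /= -[in LHS]hik -hA hkw hik.
  + split; [split; [split|]|] => //.
    by rewrite /= -[in LHS]hjk -hA hkw hjk.
- move=> i Di; apply: closedI; last exact: down_closed.
  apply: closedI; last exact: E_closed.
  apply: closedI; first exact: up_closed.
  exact: open_closedC.
- move=> i Di; have [d [Dd hid nQd]] := hne i Di.
  by exists d; split; [split; [split|]|] => //; [exact: DE|exact: ubs].
have [[[_ nQp] Ep] ps] := hp d1 Dd1.
have ub : forall d, D d -> sle mul d p by move=> d Dd; case: (hp d Dd) => [[[]]].
have sp : sle mul s p := lubs p Ep ub.
by apply: nQp; rewrite (sle_antisym Ep Es ps sp).
Qed.

Lemma wb_nbhd b e : E mul e -> waybelow mul b e ->
  exists W, [/\ open W, W e & forall y, W y -> E mul y -> waybelow mul b y].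
Proof.
move=> Ee hbe.
case: hP => _ hEM _ hbasis.
pose good (V : set S) :=
  [/\ rel_open (E mul) V, V e & forall a c, V a -> V c -> V (mul a c)].
have goodE : forall V, good V -> V `<=` E mul.
  by move=> V [[W [_ ->]] _ _] y [].
have Vex : forall r, 0 < r ->
    exists V, good V /\ V `<=` [set y | E mul y /\ rho e y < r].
  move=> r r0; have [W [oW We hW]] := cm_ball Ee r0.
  have hU : exists W0, [/\ open W0, W0 e &
      W0 `&` E mul `<=` [set y | E mul y /\ rho e y < r]].
    by exists W; split => // y [Wy Ey]; split => //; apply: hW.
  have [V [rV Ve sV mV]] := hbasis e Ee _ hU.
  by exists V.
have LB : forall V K Z, good V -> closed K -> V `<=` K -> Z `<=` E mul ->
    (forall z v, Z z -> V v -> sle mul z v) ->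
    exists z, [/\ E mul z, K z, (forall v, V v -> sle mul z v)
                & forall z', Z z' -> sle mul z' z].
  move=> V K Z gV cK sVK ZE hZ.
  have VE := goodE V gV; case: gV => _ Ve mV.
  pose f v := [set w | mul w v = w] `&` (\bigcap_(z in Z) [set w | mul z w = z])
     `&` E mul `&` K.
  have [p hp] : exists p, forall i, V i -> f i p.
    apply: (dir_fip hcpt (ex_intro _ e Ve)).
  - move=> v1 v2 V1 V2; exists (mul v1 v2); first exact: mV.
    have ev1 : mul v1 v1 = v1 := VE _ V1.
    have ev2 : mul v2 v2 = v2 := VE _ V2.
    move=> w [[[hw hZw] Ew] Kw]; split.
    + split; [split; [split|]|] => //.
      rewrite /= -[in LHS]hw -hA -hA (cl_Ecomm hS (VE _ V2) (VE _ V1)).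
      by rewrite [mul v1 (mul v1 v2)]hA ev1 hw.
    + split; [split; [split|]|] => //.
      by rewrite /= -[in LHS]hw -hA -hA ev2 hw.
  - move=> v Vv; apply: closedI => //; apply: closedI; last exact: E_closed.
    apply: closedI; first exact: down_closed.
    by apply: closed_bigI => z _; exact: up_closed.
  - move=> v Vv; exists v; split; [split; [split|]|].
    + exact: (VE _ Vv).
    + by move=> z Zz; exact: hZ z v Zz Vv.
    + exact: VE.
    + exact: sVK.
  have [[[_ hZp] Ep] Kp] := hp e Ve.
  exists p; split => //; try (by move=> v Vv; case: (hp v Vv) => [[[]]]);
    try (by move=> z' Zz'; exact: hZp z' Zz').
pose D := [set z | E mul z /\ exists V, good V /\ forall v, V v -> sle mul z v].
have DE : D `<=` E mul by move=> z [].
have noZ : forall V z v, (@set0 S) z -> V v -> sle mul z v by [].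
have dirD : updirected mul D.
  split.
  - have [V [gV _]] := Vex 1 ltr01.
    have [z [Ez _ hz _]] := LB V setT set0 gV closedT (fun _ _ => I) (sub0set _) (noZ V).
    by exists z; split => //; exists V.
  - move=> z1 z2 [Ez1 [V1 [gV1 h1]]] [Ez2 [V2 [gV2 h2]]].
    have gV : good (V1 `&` V2).
      case: gV1 gV2 => [[W1 [oW1 ->]] Ve1 m1] [[W2 [oW2 ->]] Ve2 m2].
      split.
      + exists (W1 `&` W2); split; first exact: openI.
        by rewrite setIACA setIid.
      + by split.
      + move=> a c [Va1 Va2] [Vc1 Vc2]; split; [exact: m1|exact: m2].
    have hZE : [set w | w = z1 \/ w = z2] `<=` E mul by move=> w [->|->].
    have hZ2 : forall z v, [set w | w = z1 \/ w = z2] z -> (V1 `&` V2) v -> sle mul z v.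
      by move=> w v [->|->] [Vv1 Vv2]; [apply: h1|apply: h2].
    have [z [Ez _ hz hz']] := LB (V1 `&` V2) setT [set w | w = z1 \/ w = z2] gV closedT
      (fun _ _ => I) hZE hZ2.
    exists z; split; [split => //; exists (V1 `&` V2)|apply: hz'; left|apply: hz'; right] => //.
have supD : is_sup mul D e.
  split => //.
  - by move=> z [Ez [V [[_ Ve _] hz]]]; apply: hz.
  - move=> u Eu hub.
    have [//|ne] := pselect (mul e u = e).
    exfalso.
    have ne' : e != mul e u by apply/eqP => h; apply: ne; rewrite -h.
    have := hT2; rewrite open_hausdorff => /(_ e (mul e u) ne') [[A B] /= [eA euB]].
    move=> [oA oB /eqP AB0].
    have hR : pc (fun w => mul w u) := pcR (a:=u).
    have [Q3 [oQ3 Q3e hQ3]] := hR e B oB (set_mem euB).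
    have [eps [e0 heps]] := cm_open Ee (openI oA oQ3) (conj (set_mem eA) Q3e).
    have e2 : 0 < eps / 2 by apply: divr_gt0.
    have [V [gV sV]] := Vex (eps / 2) e2.
    have sVK : V `<=` [set y | E mul y /\ rho e y <= eps / 2].
      by move=> y /sV [Ey hy]; split => //; apply: ltW.
    have [z [Ez Kz hz _]] := LB V [set y | E mul y /\ rho e y <= eps / 2] set0 gV
       (cball_closed (r:=eps/2) Ee) sVK (sub0set _) (noZ V).
    have Dz : D z by split => //; exists V.
    have zu : mul z u = z := hub z Dz.
    have [Az Q3z] : (A `&` Q3) z.
      by apply: heps => //; case: Kz => _ h; lra.
    have Bz : B z by rewrite -zu; apply: hQ3.
    have : (A `&` B) z by split.
    by rewrite AB0.
have [z Dz hbz] := hbe D DE dirD e supD (sle_refl Ee).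
case: Dz => Ez [V [[[W [oW VWE]] Ve mV] hz]].
exists W; split => //.
  by have := Ve; rewrite VWE => -[].
move=> y Wy Ey; apply: (wb_le_trans hbz).
move=> D' D'E dD' s sD' hys.
have Vy : V y by rewrite VWE.
have ys : mul y s = y := hys.
have Wys : W (mul y s) by rewrite ys.
have hL : pc (fun w => mul y w) := pcL (a:=y).
have [Q [oQ Qs hQ]] := hL s W oW Wys.
have [d0 Dd0 hd0] := dir_conv D'E dD' sD' oQ Qs.
exists d0 => //.
have Ed0 := D'E d0 Dd0.
have ed0 : mul d0 d0 = d0 := Ed0.
have Vyd : V (mul y d0).
  rewrite VWE; split; first by apply: hQ; apply: hd0 => //; exact: sle_refl.
  by apply: hEM; rewrite inE.
have := hz _ Vyd; rewrite /sle => h.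
by rewrite -[in LHS]h -hA -hA ed0 h.
Qed.

End Semi.



Section Series.
Context {R : realType}.

Definition cc (n : nat) : R := (2%:R ^+ n)^-1.
Definition geo (M : R) (u : nat -> R) := forall k, 0 <= u k /\ u k <= M * cc k.+1.
Definition psum (u : nat -> R) n := \sum_(k < n) u k.

Lemma cc_gt0 n : 0 < cc n.
Proof. by rewrite /cc invr_gt0 exprn_gt0. Qed.

Lemma ccS n : cc n.+1 = cc n / 2.
Proof. by rewrite /cc exprS invfM mulrC. Qed.

Lemma cc0 : cc 0 = 1.
Proof. by rewrite /cc expr0 invr1. Qed.

Lemma psumS u n : psum u n.+1 = psum u n + u n.
Proof. by rewrite /psum big_ord_recr. Qed.

Lemma psum0 u : psum u 0 = 0.
Proof. by rewrite /psum big_ord0. Qed.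

Section G.
Variables (M : R) (u : nat -> R) (hu : geo M u).

Lemma psum_nd : nondecreasing_seq (psum u).
Proof.
apply/nondecreasing_seqP => n; rewrite psumS.
by have [h _] := hu n; lra.
Qed.

Lemma geoM_ge0 : 0 <= M.
Proof. have [h1 h2] := hu 0; have := cc_gt0 1; nra. Qed.

Lemma f_step n : psum u n.+1 + M * cc n.+1 <= psum u n + M * cc n.
Proof.
rewrite psumS; have [h1 h2] := hu n; move: h2; rewrite ccS.
set X := M * cc n; have -> : M * (cc n / 2) = X / 2 by rewrite /X mulrA.
lra.
Qed.

Lemma f_noninc m n : (m <= n)%N -> psum u n + M * cc n <= psum u m + M * cc m.
Proof.
elim: n => [|n IH]; first by rewrite leqn0 => /eqP ->.
rewrite leq_eqVlt => /orP [/eqP ->//|]; rewrite ltnS => /IH; have := f_step n; lra.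
Qed.

Lemma psum_le m n : (m <= n)%N -> psum u n <= psum u m + M * cc m.
Proof.
move=> /f_noninc; have := geoM_ge0; have := cc_gt0 n; nra.
Qed.

Lemma psum_ub n : psum u n <= M.
Proof. by have := psum_le (leq0n n); rewrite psum0 cc0; lra. Qed.

Lemma geo_cvg : cvgn (psum u).
Proof.
apply: nondecreasing_is_cvgn; first exact: psum_nd.
by exists M => _ [n _ <-]; exact: psum_ub.
Qed.

Lemma rsum_ge n : psum u n <= rsum u.
Proof. exact: (nondecreasing_cvgn_le psum_nd geo_cvg). Qed.

Lemma rsum_le m : rsum u <= psum u m + M * cc m.
Proof.
apply: limr_le; first exact: geo_cvg.
by exists m => // n /= hmn; apply: psum_le.
Qed.

Lemma rsum_ge0 : 0 <= rsum u.
Proof. by have := rsum_ge 0; rewrite psum0. Qed.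

Lemma rsum_leM : rsum u <= M.
Proof. by have := rsum_le 0; rewrite psum0 cc0; lra. Qed.

Lemma rsum_eq0 : rsum u = 0 -> forall k, u k = 0.
Proof.
move=> h0 k; have := rsum_ge k.+1; rewrite h0 psumS.
have := psum_nd (leq0n k); rewrite psum0.
by have [h _] := hu k; lra.
Qed.

End G.

Lemma geo_add M M' u v : geo M u -> geo M' v -> geo (M + M') (fun k => u k + v k).
Proof. by move=> hu hv k; have [? ?] := hu k; have [? ?] := hv k; split; lra. Qed.

Lemma geo_mono M M' u : geo M u -> M <= M' -> geo M' u.
Proof. by move=> hu hM k; have [? ?] := hu k; have := cc_gt0 k.+1; split; nra. Qed.

Lemma rsum_mono M M' u v : geo M u -> geo M' v -> (forall k, u k <= v k) ->
  rsum u <= rsum v.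
Proof.
move=> hu hv huv; apply: ler_lim; [exact: geo_cvg hu|exact: geo_cvg hv|].
by near=> n; apply: ler_sum => i _; apply: huv.
Unshelve. all: by end_near.
Qed.

Lemma rsum_add M M' u v : geo M u -> geo M' v ->
  rsum (fun k => u k + v k) = rsum u + rsum v.
Proof.
move=> hu hv; rewrite /rsum.
have -> : (fun n => \sum_(k < n) (u k + v k)) = psum u \+ psum v.
  by apply: funext => n; rewrite /psum big_split.
by apply: limD; [exact: geo_cvg hu|exact: geo_cvg hv].
Qed.

Lemma rsum0 : rsum (fun _ => 0 : R) = 0.
Proof.
have h : geo 0 (fun _ => 0 : R) by move=> k; rewrite mul0r.
by apply/eqP; rewrite eq_le (rsum_leM h) (rsum_ge0 h).
Qed.

Lemma cc_small M d : 0 < d -> exists m, M * cc m < d.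
Proof.
move=> d0; have [M0|M0] := leP M 0.
  by exists 0%N; rewrite cc0; lra.
set n := (Num.truncn (M / d)).+1.
have h1 : M / d < n%:R by apply: truncnS_gt.
have h2 : (n%:R : R) <= 2%:R ^+ n.
  by rewrite -natrX ler_nat; apply: ltnW; apply: ltn_expl.
exists n; rewrite /cc.
have p : 0 < (2%:R : R) ^+ n by apply: exprn_gt0.
rewrite ltr_pdivrMr //.
have : M < d * n%:R by rewrite -ltr_pdivrMl // mulrC.
nra.
Qed.

End Series.



Section GM.
Context {R : realType} {S : topologicalType} (A : set S) (m : S -> S -> R)
  (hm : compatible_metric A m).
Lemma gm_ge0 x y : A x -> A y -> 0 <= m x y.
Proof. by move=> Ax Ay; case: (hm.1 x y x Ax Ay Ax). Qed.
Lemma gm_sym x y : A x -> A y -> m x y = m y x.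
Proof. by move=> Ax Ay; case: (hm.1 x y x Ax Ay Ax). Qed.
Lemma gm_tri x y z : A x -> A y -> A z -> m x z <= m x y + m y z.
Proof. by move=> Ax Ay Az; case: (hm.1 x y z Ax Ay Az). Qed.
Lemma gm0 x y : A x -> A y -> m x y = 0 <-> x = y.
Proof. by move=> Ax Ay; case: (hm.1 x y x Ax Ay Ax). Qed.
Lemma gm_ball x eps : A x -> 0 < eps ->
  exists W, [/\ open W, W x & forall y, W y -> A y -> m x y < eps].
Proof.
move=> Ax e0.
have [_ h] := hm.2 x Ax [set y | A y /\ m x y < eps].
have [|W [oW Wx sW]] := h; first by exists eps; split.
by exists W; split => // y Wy Ay; case: (sW y (conj Wy Ay)).
Qed.
Lemma gm_absdiff x y z : A x -> A y -> A z -> `|m x z - m y z| <= m x y.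
Proof.
move=> Ax Ay Az; have := gm_tri Ax Ay Az; have := gm_tri Ay Ax Az.
rewrite (gm_sym Ay Ax) => h1 h2; rewrite ler_norml; apply/andP; split; lra.
Qed.
End GM.

Section AA.
Context {R : realType} {S : topologicalType} (mul : S -> S -> S) (inv : S -> S)
  (hS : topological_clifford mul inv) (hcpt : compact [set: S])
  (hT2 : hausdorff_space S) (hP : perfect_semilattice mul)
  (rho : S -> S -> R) (hrho : compatible_metric (E mul) rho)
  (hrho1 : forall x y, E mul x -> E mul y -> rho x y <= 1).

Local Notation aa := (a_ mul rho).
Local Notation Y b := [set y | E mul y /\ ~ waybelow mul b y].

Lemma a_bounds b e : E mul e -> 0 <= aa b e /\ aa b e <= 1.
Proof.
move=> Ee; rewrite /a_; case: asboolP => hb; first by split; lra.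
set C := [set rho e y | y in Y b].
have [[z Cz]|hn] := pselect (C !=set0); last first.
  have -> : C = set0 by apply/seteqP; split => z // hz; apply: hn; exists z.
  by rewrite inf0; split; lra.
have lb : has_lbound C.
  by exists 0 => _ [y [Ey _] <-]; exact: (gm_ge0 hrho Ee Ey).
split.
  by apply: lb_le_inf; [exists z|move=> _ [y [Ey _] <-]; exact: (gm_ge0 hrho Ee Ey)].
case: Cz => y [Ey hy] hz; have := ge_inf lb (ex_intro2 _ _ y (conj Ey hy) erefl).
by have := hrho1 Ee Ey; lra.
Qed.

Lemma a_lip b e e' : E mul e -> E mul e' -> aa b e <= aa b e' + rho e e'.
Proof.
move=> Ee Ee'; have r0 := gm_ge0 hrho Ee Ee'.
rewrite /a_; case: asboolP => hb; first lra.
have [[y [Ey hy]]|hn] := pselect (Y b !=set0); last first.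
  have -> : Y b = set0 by apply/seteqP; split => z // hz; apply: hn; exists z.
  by rewrite !image_set0 inf0; lra.
have lbe : has_lbound [set rho e y | y in Y b].
  by exists 0 => _ [z [Ez _] <-]; exact: (gm_ge0 hrho Ee Ez).
rewrite -lerBlDr; apply: lb_le_inf.
  by exists (rho e' y), y.
move=> _ [z [Ez hz] <-]; rewrite lerBlDr.
have := ge_inf lbe (ex_intro2 _ _ z (conj Ez hz) erefl).
have := gm_tri hrho Ee Ee' Ez; lra.
Qed.

Lemma a_absdiff b e e' : E mul e -> E mul e' -> `|aa b e - aa b e'| <= rho e e'.
Proof.
move=> Ee Ee'; have := a_lip b Ee Ee'; have := a_lip b Ee' Ee.
rewrite (gm_sym hrho Ee' Ee) => h1 h2; rewrite ler_norml; apply/andP; split; lra.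
Qed.

Lemma a_pos b e : E mul b -> E mul e -> waybelow mul b e -> 0 < aa b e.
Proof.
move=> Eb Ee hbe; rewrite /a_; case: asboolP => hb; first lra.
have [[y0 Yy0]|hn] := pselect (Y b !=set0); last first.
  exfalso; apply: hb; split => // y Ey.
  apply: (wb_le Ey); apply: contrapT => nw; apply: hn; by exists y.
have [W [oW We hW]] := wb_nbhd hS hcpt hT2 hP hrho Ee hbe.
have [eps [e0 heps]] := cm_open hrho Ee oW We.
apply: (lt_le_trans e0); apply: lb_le_inf; first by exists (rho e y0), y0.
move=> _ [y [Ey hy] <-]; rewrite leNgt; apply/negP => lt.
by apply: hy; apply: hW => //; apply: heps.
Qed.

Lemma a_pos_le b e : E mul e -> 0 < aa b e -> sle mul b e.
Proof.
move=> Ee; rewrite /a_; case: asboolP => hb; first by move=> _; apply: hb.2.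
have [wb|nw] := pselect (waybelow mul b e); first by move=> _; exact: wb_le Ee wb.
have lbe : has_lbound [set rho e y | y in Y b].
  by exists 0 => _ [z [Ez _] <-]; exact: (gm_ge0 hrho Ee Ez).
have := ge_inf lbe (ex_intro2 _ _ e (conj Ee nw) erefl).
by rewrite (gm0 hrho Ee Ee).2 //; lra.
Qed.

End AA.



Section RC.
Context {R : realType} {S : topologicalType}.

Definition rc (f : S -> R) (y0 : S) := forall eps, 0 < eps ->
  exists W, [/\ open W, W y0 & forall y, W y -> `|f y - f y0| < eps].

Lemma rc_cst k y0 : rc (fun _ => k) y0.
Proof. by move=> eps e0; exists setT; split => // [|y _]; [exact: openT|rewrite subrr normr0]. Qed.

Lemma rc_add f g y0 : rc f y0 -> rc g y0 -> rc (fun y => f y + g y) y0.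
Proof.
move=> hf hg eps e0.
have e2 : 0 < eps / 2 by apply: divr_gt0.
have [W1 [oW1 W1y h1]] := hf _ e2; have [W2 [oW2 W2y h2]] := hg _ e2.
exists (W1 `&` W2); split; [exact: openI|by split|].
move=> y [/h1 + /h2]; rewrite !ltr_norml => /andP [a1 a2] /andP [b1 b2].
by apply/andP; split; lra.
Qed.

Lemma rc_scale k f y0 : rc f y0 -> rc (fun y => k * f y) y0.
Proof.
move=> hf eps e0.
have K0 : 0 <= `|k| by apply: normr_ge0.
have e2 : 0 < eps / (`|k| + 1) by apply: divr_gt0 => //; lra.
have [W [oW Wy h]] := hf _ e2.
exists W; split => // y /h hy.
rewrite -mulrBr normrM.
set d := `|f y - f y0| in hy *; have d0 : 0 <= d by apply: normr_ge0.
move: hy; rewrite ltr_pdivlMr; last lra.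
nra.
Qed.

Lemma rc_absdiff k f y0 : rc f y0 -> rc (fun y => `|k - f y|) y0.
Proof.
move=> hf eps e0; have [W [oW Wy h]] := hf _ e0.
exists W; split => // y /h hy.
apply: (le_lt_trans (ler_dist_dist _ _)).
have -> : k - f y - (k - f y0) = - (f y - f y0) by ring.
by rewrite normrN.
Qed.

Lemma rc_psum (g : nat -> S -> R) y0 : (forall k, rc (g k) y0) ->
  forall m, rc (fun y => psum (fun k => cc k.+1 * g k y) m) y0.
Proof.
move=> hg; elim => [|m IH].
  have -> : (fun y => psum (fun k => cc k.+1 * g k y) 0) = fun _ => 0.
    by apply: funext => y; rewrite psum0.
  exact: rc_cst.
have -> : (fun y => psum (fun k => cc k.+1 * g k y) m.+1) =
   fun y => psum (fun k => cc k.+1 * g k y) m + cc m.+1 * g m y.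
  by apply: funext => y; rewrite psumS.
by apply: rc_add => //; apply: rc_scale.
Qed.

Lemma geo_of (g : nat -> R) M : (forall k, 0 <= g k /\ g k <= M) ->
  geo M (fun k => cc k.+1 * g k).
Proof.
move=> hg k /=; have [h1 h2] := hg k; have c0 : (0 : R) < cc k.+1 by apply: cc_gt0.
split; [exact: mulr_ge0 (ltW c0) h1|by rewrite [cc _ * _]mulrC ler_pM2r].
Qed.

Lemma rc_rsum (g : nat -> S -> R) M y0 :
  (forall k y, 0 <= g k y /\ g k y <= M) -> (forall k, rc (g k) y0) ->
  rc (fun y => rsum (fun k => cc k.+1 * g k y)) y0.
Proof.
move=> hb hg eps e0.
have e3 : 0 < eps / 3 by apply: divr_gt0.
have [m hm] := cc_small M e3.
have [W [oW Wy h]] := rc_psum hg m e3.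
exists W; split => // y /h.
have gy := geo_of (hb^~ y); have gy0 := geo_of (hb^~ y0).
have := rsum_ge gy m; have := rsum_le gy m.
have := rsum_ge gy0 m; have := rsum_le gy0 m.
rewrite !ltr_norml => h1 h2 h3 h4 /andP [h5 h6].
by apply/andP; split; lra.
Qed.

Lemma rc_open (f : S -> R) r : (forall y, rc f y) -> open [set y | f y < r].
Proof.
move=> hf; apply: open_local => y /= hy.
have e0 : 0 < r - f y by rewrite subr_gt0.
have [W [oW Wy h]] := hf y _ e0.
exists W; split => // z /h; rewrite ltr_norml => /andP [_ h2] /=; lra.
Qed.

Lemma rc_closed (f : S -> R) r : (forall y, rc f y) -> closed [set y | f y <= r].
Proof.
move=> hf; rewrite -openC; apply: open_local => y /= hy.
have lt : r < f y by rewrite ltNge; apply/negP.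
have e0 : 0 < f y - r by rewrite subr_gt0.
have [W [oW Wy h]] := hf y _ e0.
exists W; split => // z /h; rewrite ltr_norml => /andP [h1 _] /= hz; lra.
Qed.

End RC.



Section Main.
Context {R : realType} {S : topologicalType} (mul : S -> S -> S) (inv : S -> S)
  (hS : topological_clifford mul inv) (hcpt : compact [set: S])
  (hT2 : hausdorff_space S) (hP : perfect_semilattice mul)
  (B3 : inverse_limit_preserving mul inv)
  (rho : S -> S -> R) (bs : nat -> S) (db : S -> S -> S -> R)
  (c : S -> S) (t : S -> nat -> S)
  (hrho : compatible_metric (E mul) rho)
  (hrho1 : forall x y, E mul x -> E mul y -> rho x y <= 1)
  (hbs : domain_basis mul [set b | exists j, (0 < j)%N /\ bs j = b])
  (hdb : forall j, (0 < j)%N ->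
     compatible_metric (G mul inv (bs j)) (db (bs j)) /\
     forall x y, G mul inv (bs j) x -> G mul inv (bs j) y -> db (bs j) x y <= 1)
  (hc : forall j, (0 < j)%N -> G mul inv (bs j) (c (bs j)))
  (ht : forall j, (0 < j)%N -> dense_seq (G mul inv (bs j)) (fun k => t (bs j) k.+1)).

Local Notation ic := (idc mul inv).
Local Notation aa := (a_ mul rho).
Local Notation ph := (phihat mul inv c).
Local Notation PP := (P_ mul inv rho db c t).
Local Notation dd := (dmetric mul inv rho bs db c t).

Definition Ak b k y := aa b (ic y) * db b (ph b y) (t b k.+1).

Lemma P_E b x y : PP b x y = `|aa b (ic x) - aa b (ic y)| +
  rsum (fun k => cc k.+1 * `|Ak b k x - Ak b k y|).
Proof. by []. Qed.

Lemma dd_E x y : dd x y =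
  rho (ic x) (ic y) + rsum (fun j => cc j.+1 * PP (bs j.+1) x y).
Proof. by []. Qed.

Lemma Eic y : E mul (ic y).
Proof. exact (cl_idcE hS y). Qed.

Lemma Ebs j : (0 < j)%N -> E mul (bs j).
Proof. by move=> hj; apply: hbs.1; exists j. Qed.

Lemma ph_eq b y : sle mul b (ic y) -> ph b y = mul b y.
Proof. by rewrite /phihat; case: asboolP. Qed.

Lemma Gph j y : (0 < j)%N -> G mul inv (bs j) (ph (bs j) y).
Proof.
move=> hj; rewrite /phihat; case: asboolP => h /=; last exact: hc.
exact (cl_GM hS (Ebs hj) h).
Qed.

Lemma Gt j k : (0 < j)%N -> G mul inv (bs j) (t (bs j) k.+1).
Proof. by move=> hj; exact: (ht hj).1 k. Qed.

Lemma a_b b y : 0 <= aa b (ic y) /\ aa b (ic y) <= 1.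
Proof. exact (a_bounds hrho hrho1 b (Eic y)). Qed.

Lemma D_b j y k : (0 < j)%N ->
  0 <= db (bs j) (ph (bs j) y) (t (bs j) k.+1) /\
  db (bs j) (ph (bs j) y) (t (bs j) k.+1) <= 1.
Proof.
move=> hj; have [cmb db1] := hdb hj.
split; [exact (gm_ge0 cmb (Gph y hj) (Gt k hj))|exact (db1 _ _ (Gph y hj) (Gt k hj))].
Qed.

Lemma A_b j k y : (0 < j)%N -> 0 <= Ak (bs j) k y /\ Ak (bs j) k y <= 1.
Proof.
move=> hj; rewrite /Ak; have [a0 a1] := a_b (bs j) y; have [d0 d1] := D_b y k hj.
by split; nra.
Qed.

Lemma rc_a b y0 : rc (fun y => aa b (ic y)) y0.
Proof.
move=> eps e0; have [W [oW Wx h]] := gm_ball hrho (Eic y0) e0.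
have hI : pc ic := pc_idc hS.
have [Q [oQ Qy hQ]] := hI y0 W oW Wx.
exists Q; split => // y Qy'.
apply: le_lt_trans (a_absdiff hrho b (Eic y) (Eic y0)) _.
rewrite (gm_sym hrho (Eic y) (Eic y0)); exact: h _ (hQ y Qy') (Eic y).
Qed.

Lemma rc_rho x y0 : rc (fun y => rho (ic x) (ic y)) y0.
Proof.
move=> eps e0; have [W [oW Wx h]] := gm_ball hrho (Eic y0) e0.
have hI : pc ic := pc_idc hS.
have [Q [oQ Qy hQ]] := hI y0 W oW Wx.
exists Q; split => // y Qy'.
rewrite (gm_sym hrho (Eic x) (Eic y)) (gm_sym hrho (Eic x) (Eic y0)).
apply: le_lt_trans (gm_absdiff hrho (Eic y) (Eic y0) (Eic x)) _.
rewrite (gm_sym hrho (Eic y) (Eic y0)); exact: h _ (hQ y Qy') (Eic y).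
Qed.

Lemma rc_A j k y0 : (0 < j)%N -> rc (Ak (bs j) k) y0.
Proof.
move=> hj; rewrite /Ak.
have Eb := Ebs hj; have Gtt := Gt k hj.
have [cmb db1] := hdb hj.
have ra := rc_a (bs j) y0.
move=> eps e0.
have [a0 a1] := a_b (bs j) y0.
move: a0; rewrite le_eqVlt => /orP [/eqP a0|apos].
- have [W [oW Wy h]] := ra eps e0.
  exists W; split => // y /h hy; rewrite -a0 in hy *.
  rewrite mul0r subr0; rewrite subr0 in hy.
  have [ay0 ay1] := a_b (bs j) y; have [dy0 dy1] := D_b y k hj.
  move: hy; rewrite !ltr_norml => /andP [h1 h2]; apply/andP; split; nra.
- have [W1 [oW1 W1y h1]] := ra _ apos.
  have pos : forall y, W1 y -> sle mul (bs j) (ic y).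
    move=> y /h1; rewrite ltr_norml => /andP [hh _].
    apply: (a_pos_le hrho (Eic y)); lra.
  have e2 : 0 < eps / 2 by apply: divr_gt0.
  have [W2 [oW2 W2y h2]] := ra _ e2.
  have Gby0 : G mul inv (bs j) (mul (bs j) y0) := cl_GM hS Eb (pos y0 W1y).
  have [W3 [oW3 W3y h3]] := gm_ball cmb Gby0 e2.
  have hL : pc (fun w => mul (bs j) w) := pcL hS (a:=bs j).
  have [Q [oQ Qy hQ]] := hL y0 W3 oW3 W3y.
  exists (W1 `&` W2 `&` Q); split.
  + by apply: openI => //; apply: openI.
  + by split; [split|].
  move=> y [[W1y' W2y'] Qy'].
  have Gby : G mul inv (bs j) (mul (bs j) y) := cl_GM hS Eb (pos y W1y').
  have Dy : `|db (bs j) (mul (bs j) y) (t (bs j) k.+1) -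
              db (bs j) (mul (bs j) y0) (t (bs j) k.+1)| < eps / 2.
    apply: le_lt_trans (gm_absdiff cmb Gby Gby0 Gtt) _.
    by rewrite (gm_sym cmb Gby Gby0); exact: h3 _ (hQ y Qy') Gby.
  have Ay := h2 y W2y'.
  have [ay0 ay1] := a_b (bs j) y; have [dy0 dy1] := D_b y k hj.
  have [d00 d01] := D_b y0 k hj.
  move: dy0 dy1 d00 d01.
  rewrite (ph_eq (pos y W1y')) (ph_eq (pos y0 W1y)) => dy0 dy1 d00 d01.
  move: Dy Ay; rewrite !ltr_norml => /andP [h4 h5] /andP [h6 h7].
  apply/andP; split; nra.
Qed.

Lemma absA_b j k x y : (0 < j)%N ->
  0 <= `|Ak (bs j) k x - Ak (bs j) k y| /\ `|Ak (bs j) k x - Ak (bs j) k y| <= 1.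
Proof.
move=> hj; have [? ?] := A_b k x hj; have [? ?] := A_b k y hj.
by split => //; rewrite ler_norml; apply/andP; split; lra.
Qed.

Lemma P_b j x y : (0 < j)%N -> 0 <= PP (bs j) x y /\ PP (bs j) x y <= 2.
Proof.
move=> hj; rewrite P_E.
have g := geo_of (fun k => absA_b k x y hj).
have := rsum_ge0 g; have := rsum_leM g.
have [? ?] := a_b (bs j) x; have [? ?] := a_b (bs j) y.
have : `|aa (bs j) (ic x) - aa (bs j) (ic y)| <= 1.
  by rewrite ler_norml; apply/andP; split; lra.
have := normr_ge0 (aa (bs j) (ic x) - aa (bs j) (ic y)).
move=> h1 h2 h3 h4; split; lra.
Qed.

Lemma rc_P j x y0 : (0 < j)%N -> rc (fun y => PP (bs j) x y) y0.
Proof.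
move=> hj; apply: rc_add; first by apply: rc_absdiff; exact: rc_a.
apply: (@rc_rsum _ _ (fun k y => `|Ak (bs j) k x - Ak (bs j) k y|) 1).
  by move=> k y; exact: absA_b.
by move=> k; apply: rc_absdiff; exact: rc_A.
Qed.

Lemma rc_d x y0 : rc (fun y => dd x y) y0.
Proof.
apply: rc_add; first exact: rc_rho.
apply: (@rc_rsum _ _ (fun j y => PP (bs j.+1) x y) 2).
  by move=> k y; exact: P_b.
by move=> k; exact: rc_P.
Qed.


Lemma P_xx b x : PP b x x = 0.
Proof.
rewrite P_E subrr normr0 add0r.
have -> : (fun k => cc k.+1 * `|Ak b k x - Ak b k x|) = fun _ => 0.
  by apply: funext => k; rewrite subrr normr0 mulr0.
exact: rsum0.
Qed.

Lemma P_sym b x y : PP b x y = PP b y x.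
Proof.
rewrite !P_E distrC; congr (_ + rsum _); apply: funext => k; by rewrite distrC.
Qed.

Lemma P_tri j x y z : (0 < j)%N -> PP (bs j) x z <= PP (bs j) x y + PP (bs j) y z.
Proof.
move=> hj; rewrite !P_E.
have g1 := geo_of (fun k => absA_b k x y hj).
have g2 := geo_of (fun k => absA_b k y z hj).
have g3 := geo_of (fun k => absA_b k x z hj).
have le : rsum (fun k => cc k.+1 * `|Ak (bs j) k x - Ak (bs j) k z|) <=
    rsum (fun k => cc k.+1 * `|Ak (bs j) k x - Ak (bs j) k y| +
                   cc k.+1 * `|Ak (bs j) k y - Ak (bs j) k z|).
  apply: (rsum_mono g3 (geo_add g1 g2)) => k /=.
  rewrite -mulrDr; apply: ler_wpM2l; [exact: ltW (cc_gt0 _)|exact: ler_distD].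
rewrite (rsum_add g1 g2) in le.
have := ler_distD (aa (bs j) (ic y)) (aa (bs j) (ic x)) (aa (bs j) (ic z)).
lra.
Qed.

Lemma gP x y : geo 2 (fun j => cc j.+1 * PP (bs j.+1) x y).
Proof. exact: geo_of (fun j => P_b x y (ltn0Sn j)). Qed.

Lemma d_ge0 x y : 0 <= dd x y.
Proof.
rewrite dd_E; have := rsum_ge0 (gP x y).
have := gm_ge0 hrho (Eic x) (Eic y); lra.
Qed.

Lemma d_xx x : dd x x = 0.
Proof.
rewrite dd_E (gm0 hrho (Eic x) (Eic x)).2 // add0r.
have -> : (fun j => cc j.+1 * PP (bs j.+1) x x) = fun _ => 0.
  by apply: funext => j; rewrite P_xx mulr0.
exact: rsum0.
Qed.

Lemma d_sym x y : dd x y = dd y x.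
Proof.
rewrite !dd_E (gm_sym hrho (Eic x) (Eic y)); congr (_ + rsum _).
by apply: funext => j; rewrite P_sym.
Qed.

Lemma d_tri x y z : dd x z <= dd x y + dd y z.
Proof.
rewrite !dd_E.
have le : rsum (fun j => cc j.+1 * PP (bs j.+1) x z) <=
    rsum (fun j => cc j.+1 * PP (bs j.+1) x y + cc j.+1 * PP (bs j.+1) y z).
  apply: (rsum_mono (gP x z) (geo_add (gP x y) (gP y z))) => k /=.
  rewrite -mulrDr; apply: ler_wpM2l; [exact: ltW (cc_gt0 _)|exact: P_tri].
rewrite (rsum_add (gP x y) (gP y z)) in le.
have := gm_tri hrho (Eic x) (Eic y) (Eic z).
lra.
Qed.

Lemma d_sep x y : dd x y = 0 -> x = y.
Proof.
move=> h0; move: (h0); rewrite dd_E => h1.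
have r0 := gm_ge0 hrho (Eic x) (Eic y); have s0 := rsum_ge0 (gP x y).
have hr : rho (ic x) (ic y) = 0 by lra.
have hs : rsum (fun j => cc j.+1 * PP (bs j.+1) x y) = 0 by lra.
have exy : ic x = ic y := (gm0 hrho (Eic x) (Eic y)).1 hr.
have hP0 : forall j, (0 < j)%N -> PP (bs j) x y = 0.
  case=> // j _; have := rsum_eq0 (gP x y) hs j => /= /eqP.
  rewrite mulf_eq0 => /orP [/eqP c0|/eqP //].
  by move: (cc_gt0 (R:=R) j.+1); rewrite c0 ltxx.
have hA0 : forall j k, (0 < j)%N -> Ak (bs j) k x = Ak (bs j) k y.
  move=> j k hj; have := hP0 j hj; rewrite P_E.
  have g := geo_of (fun k => absA_b k x y hj).
  have := rsum_ge0 g.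
  have := normr_ge0 (aa (bs j) (ic x) - aa (bs j) (ic y)).
  move=> n0 r1 h.
  have hz : rsum (fun k => cc k.+1 * `|Ak (bs j) k x - Ak (bs j) k y|) = 0 by lra.
  have := rsum_eq0 g hz k => /= /eqP; rewrite mulf_eq0 => /orP [/eqP c0|].
    by move: (cc_gt0 (R:=R) k.+1); rewrite c0 ltxx.
  by rewrite normr_eq0 subr_eq0 => /eqP.
have key : forall j, (0 < j)%N -> 0 < aa (bs j) (ic x) ->
    mul (bs j) x = mul (bs j) y.
  move=> j hj apos.
  have sb : sle mul (bs j) (ic x) := a_pos_le hrho (Eic x) apos.
  have sby : sle mul (bs j) (ic y) by rewrite -exy.
  have [cmb _] := hdb hj.
  have Gx : G mul inv (bs j) (mul (bs j) x) := cl_GM hS (Ebs hj) sb.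
  have Gy : G mul inv (bs j) (mul (bs j) y) := cl_GM hS (Ebs hj) sby.
  have nz : aa (bs j) (ic x) != 0 by rewrite gt_eqF.
  have hk : forall k, db (bs j) (mul (bs j) x) (t (bs j) k.+1) =
                      db (bs j) (mul (bs j) y) (t (bs j) k.+1).
    move=> k; have := hA0 j k hj; rewrite /Ak (ph_eq sb) (ph_eq sby) -exy.
    by move/(mulfI nz).
  apply/(gm0 cmb Gx Gy).
  have d0 := gm_ge0 cmb Gx Gy.
  move: d0; rewrite le_eqVlt => /orP [/eqP <- //|dpos].
  exfalso.
  have e2 : 0 < db (bs j) (mul (bs j) x) (mul (bs j) y) / 2 by apply: divr_gt0.
  have [W [oW Wx hW]] := gm_ball cmb Gx e2.
  have [k Wk] := (ht hj).2 _ Gx W oW Wx.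
  have Gk := Gt k hj.
  have hWk := hW _ Wk Gk.
  have := gm_tri cmb Gx Gk Gy.
  rewrite (gm_sym cmb Gk Gy) -(hk k).
  lra.
set e := ic x.
have [Ddir Dsup] := hbs.2 e (Eic x).
set D := [set b | [set b | exists j, (0 < j)%N /\ bs j = b] b /\ waybelow mul b e].
have DE : D `<=` E mul by move=> b [hb _]; exact: hbs.1.
case: (B3 DE Ddir Dsup) => _ [inj _] _ _ _.
apply: inj.
- by [].
- by rewrite /G /= /e exy.
- move=> b; rewrite /D /= => -[[j [hj hbj]] wb]; rewrite -hbj /phi.
  apply: (key j hj); rewrite -hbj in wb.
  exact: (a_pos hS hcpt hT2 hP hrho (Ebs hj) (Eic x) wb).
Qed.

Lemma d_compat : compatible_metric [set: S] dd.
Proof.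
split.
  move=> x y z _ _ _; split; [exact: d_ge0| |exact: d_sym|exact: d_tri].
  by split; [exact: d_sep|move=> ->; exact: d_xx].
move=> x _ U; split.
- move=> [W [oW Wx sWU]].
  have [//|hn] := pselect (exists eps, 0 < eps /\
     [set y | [set: S] y /\ dd x y < eps] `<=` U).
  exfalso.
  have hne : forall r, 0 < r -> exists y, dd x y <= r /\ ~ W y.
    move=> r r0; apply: contrapT => hx; apply: hn; exists r; split => // y [_ hy].
    apply: sWU; split => //; apply: contrapT => nW; apply: hx; exists y.
    by split => //; exact: ltW.
  have [p hp] : exists p, forall r, 0 < r -> ([set y | dd x y <= r] `&` ~` W) p.
    apply: (dir_fip hcpt (ex_intro _ 1 ltr01)).
    + move=> r1 r2 h1 h2; exists (Num.min r1 r2); first by rewrite lt_min h1 h2.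
      move=> y [/= hy nW]; split; split => //=.
      * by apply: le_trans hy _; rewrite ge_min lexx.
      * by apply: le_trans hy _; rewrite ge_min lexx orbT.
    + move=> r _; apply: closedI; last exact: open_closedC.
      exact: rc_closed (rc_d x).
    + by move=> r /hne [y [h1 h2]]; exists y.
  have hp0 : dd x p = 0.
    apply/eqP; rewrite eq_le d_ge0 andbT leNgt; apply/negP => pos.
    have [h _] := hp _ (divr_gt0 pos (ltr0n _ 2)); move: h => /=; lra.
  have [_ nWp] := hp 1 ltr01.
  by apply: nWp; rewrite -(d_sep hp0).
- move=> [eps [e0 h]].
  exists [set y | dd x y < eps]; split.
  + exact: rc_open (rc_d x).
  + by rewrite /= d_xx.
  + by move=> y [hy _]; apply: h.
Qed.

End Main.

Unset Implicit Arguments. Set Strict Implicit.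

Theorem corollary4p16 (R : realType) (S : topologicalType)
  (mul : S -> S -> S) (inv : S -> S)
  (hS : topological_clifford mul inv)
  (hcpt : compact [set: S]) (hT2 : hausdorff_space S)
  (B1 : perfect_semilattice mul /\ metrizable (R := R) (E mul))
  (B2 : forall e, E mul e ->
          compact (G mul inv e) /\ metrizable (R := R) (G mul inv e))
  (B3 : inverse_limit_preserving mul inv)
  (rho : S -> S -> R) (bs : nat -> S) (db : S -> S -> S -> R)
  (c : S -> S) (t : S -> nat -> S)
  (hrho : compatible_metric (E mul) rho /\
          forall x y, E mul x -> E mul y -> rho x y <= 1)
  (hbs : domain_basis mul [set b | exists j, (0 < j)%N /\ bs j = b])
  (hdb : forall j, (0 < j)%N ->
     compatible_metric (G mul inv (bs j)) (db (bs j)) /\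
     forall x y, G mul inv (bs j) x -> G mul inv (bs j) y -> db (bs j) x y <= 1)
  (hc : forall j, (0 < j)%N -> G mul inv (bs j) (c (bs j)))
  (ht : forall j, (0 < j)%N -> dense_seq (G mul inv (bs j)) (fun k => t (bs j) k.+1)) :
  compatible_metric [set: S] (dmetric mul inv rho bs db c t).
Proof.
case: B1 => hP _; case: hrho => hrho' hrho1.
exact: (d_compat hS hcpt hT2 hP B3 hrho' hrho1 hbs hdb hc ht).
Qed.
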